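(* Let $\alpha$ be an automorphism of a commutative ring $R$, $S=R[\theta;\alpha]$, and let $\rho$ be a nonzero non-unit of $R$. Then $S/\rho S$ is not an Artinian right $S$-module.
   Context: $R[\theta;\alpha]$: skew polynomial ring with $\theta r=\alpha(r)\theta$. *)

(* Defs.v *)
From HB Require Import structures.
From mathcomp Require Import all_boot all_order all_algebra.
Set Implicit Arguments. Unset Strict Implicit. Unset Printing Implicit Defensive.
Import Order.TTheory GRing.Theory Num.Theory.
Local Open Scope ring_scope.

(* The skew polynomial ring S = R[theta; alpha], theta r = alpha(r) theta.
   Elements of S are represented by their coefficient polynomials
   sum_i a_i theta^i  <-->  sum_i a_i 'X^i  in {poly R}  (left coefficients);
   addition is that of {poly R}, and multiplication is the skew product
     (a theta^i) (b theta^j) = a alpha^i(b) theta^(i+j). *)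
Definition skew_mul (R : comNzRingType) (alpha : R -> R) (p q : {poly R})
  : {poly R} :=
  \sum_(i < size p) \sum_(j < size q)
     ((p`_i * iter i alpha q`_j) *: 'X^(i + j)).

(* A right S-submodule of the cyclic right S-module S / rho S, described
   (via the canonical projection S -> S/rho S) by its full preimage N in S:
   N contains rho S, is an additive subgroup, and is closed under right
   multiplication by S.  Every submodule of S/rho S is the image of exactly
   one such N. *)
Definition quot_submodule (R : comNzRingType) (alpha : R -> R) (rho : R)
  (N : {poly R} -> Prop) : Prop :=
  [/\ (forall s, N (skew_mul alpha rho%:P s)),
      N 0,
      (forall x y, N x -> N y -> N (x - y)) &
      (forall x s, N x -> N (skew_mul alpha x s))].

Definition quot_artinian (R : comNzRingType) (alpha : R -> R) (rho : R) : Prop :=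
  forall N : nat -> {poly R} -> Prop,
    (forall n, quot_submodule alpha rho (N n)) ->
    (forall n x, N n.+1 x -> N n x) ->
    exists n0, forall n, (n0 <= n)%N -> forall x, N n x <-> N n0 x.

(* Main.v *)
Require Import Defs.
From HB Require Import structures.
From mathcomp Require Import all_boot all_order all_algebra.
Import GRing.Theory.
Local Open Scope ring_scope.

Section Aux.
Variable (R : comNzRingType) (alpha : R -> R) (rho : R).
Definition inI (x : R) := exists c, x = rho * c.

Lemma inI0 : inI 0. Proof. by exists 0; rewrite mulr0. Qed.
Lemma inID x y : inI x -> inI y -> inI (x + y).
Proof. by move=> [a ->] [b ->]; exists (a + b); rewrite mulrDr. Qed.
Lemma inIB x y : inI x -> inI y -> inI (x - y).
Proof. by move=> [a ->] [b ->]; exists (a - b); rewrite mulrBr. Qed.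
Lemma inIM x y : inI x -> inI (x * y).
Proof. by move=> [a ->]; exists (a * y); rewrite mulrA. Qed.

Lemma skew_coef n (p q : {poly R}) :
  (forall i, (i < n)%N -> inI p`_i) ->
  forall k, (k < n)%N -> inI (skew_mul alpha p q)`_k.
Proof.
move=> Hp k Hk; rewrite /skew_mul coef_sum.
apply: (big_ind inI); [exact: inI0 | exact: inID |] => i _.
rewrite coef_sum; apply: (big_ind inI); [exact: inI0 | exact: inID |] => j _.
rewrite coefZ coefXn; case: eqP => [Ek|_]; last by rewrite mulr0; exact: inI0.
rewrite mulr1; apply: inIM; apply: Hp; apply: leq_ltn_trans Hk.
by rewrite Ek leq_addr.
Qed.
End Aux.
Arguments inI {R} rho x.

Theorem lemma4p8 (R : comNzRingType) (alpha : {rmorphism R -> R})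
  (alpha_bij : bijective alpha) (rho : R)
  (rho_nz : rho != 0) (rho_nonunit : ~ (exists u : R, rho * u = 1)) :
  ~ quot_artinian alpha rho.
Proof.
move=> H.
pose N := fun (n : nat) (p : {poly R}) => forall i, (i < n)%N -> inI rho p`_i.
have [|n x Hx i Hi|n0 Hn0] := H N.
- move=> n; split.
  + move=> s; apply: skew_coef => i _; rewrite coefC.
    by case: eqP => _; [exists 1; rewrite mulr1 | exact: inI0].
  + by move=> i _; rewrite coef0; exact: inI0.
  + by move=> x y Hx Hy i Hi; rewrite coefB; apply: inIB; [apply: Hx|apply: Hy].
  + by move=> x s Hx; apply: skew_coef.
- by apply: Hx; apply: ltnW.
- have : N n0.+1 'X^n0.
    apply/(Hn0 n0.+1 (leqnSn n0)) => i Hi.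
    by rewrite coefXn (ltn_eqF Hi); exact: inI0.
  move=> /(_ n0 (ltnSn n0)); rewrite coefXn eqxx => -[c Hc].
  by apply: rho_nonunit; exists c.
Qed.
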